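(* Let $\mathcal{X}$ be a finite set, let $\eta \in [0,1/2]$, $\gamma>0$, and let $p^{(0)}$ be the uniform distribution on $\mathcal{X}$. Let $h^{(1)},\dots,h^{(T)}:\mathcal{X}\to[0,1]$ be functions and define distributions recursively by $p^{(t)}(x) \propto p^{(t-1)}(x)\,(1-\eta h^{(t)}(x))$ (normalized to sum to $1$ over $\mathcal{X}$). Assume that for every $t\in\{1,\dots,T\}$, \[\sum_{x\in\mathcal{X}} h^{(t)}(x)\,p^{(t-1)}(x) \ge \gamma .\] Let $M_T(x) = \sum_{t=1}^T h^{(t)}(x)$. Then for all $x\in\mathcal{X}$, \[\log p^{(T)}(x) \ge \frac{\gamma\eta}{\eta+2}\,T - \eta(\eta+1)\,M_T(x) - \log(2|\mathcal{X}|).\]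
   Context: $M_T(x)$ counts (fractionally) how many times the classifiers $h^{(t)}$ downweight the point $x$. *)

(* Defs.v *)
From Stdlib Require Import Reals List.
Open Scope R_scope.

Definition lsum {A : Type} (xs : list A) (f : A -> R) : R :=
  fold_right (fun a acc => f a + acc) 0 xs.

(* The finite set X is represented by a type A together with a duplicate-free
   list xs enumerating all of its elements; |X| = length xs.
   h t is the t-th classifier h^(t) (used for t = 1..T).
   pdist xs eta h t = p^(t): p^(0) uniform, and
   p^(t)(x) = p^(t-1)(x) (1 - eta h^(t)(x)) / Z_t,
   Z_t = sum_y p^(t-1)(y) (1 - eta h^(t)(y)). *)
Fixpoint pdist {A : Type} (xs : list A) (eta : R) (h : nat -> A -> R) (t : nat)
  : A -> R :=
  match t with
  | O => fun _ => / INR (length xs)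
  | S t' =>
      fun x =>
        pdist xs eta h t' x * (1 - eta * h (S t') x)
        / lsum xs (fun y => pdist xs eta h t' y * (1 - eta * h (S t') y))
  end.

Definition M {A : Type} (h : nat -> A -> R) (T : nat) (x : A) : R :=
  lsum (seq 1 T) (fun t => h t x).

(* Main.v *)
Require Import Defs.
From Stdlib Require Import Reals List Lra Lia.
From Coquelicot Require Import Coquelicot.
Open Scope R_scope.

Lemma ln_bound u : 0 <= u <= 1/2 -> ln (1 - u) >= - u - u * u.
Proof.
  intros [H0 H1].
  destruct (Req_dec u 0) as [->|Hu].
  { replace (1-0) with 1 by lra. rewrite ln_1. lra. }
  assert (D : forall c, 0 <= c <= u -> derivable_pt_lim (fun v => ln (1 - v) + v + v * v) c
       (-1/(1-c) + 1 + 2*c)).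
  { intros c Hc. apply is_derive_Reals. auto_derive. lra. field. lra. }
  destruct (MVT_cor2 _ _ 0 u ltac:(lra) D) as [c [Hc1 Hc2]].
  assert (0 <= (-1/(1-c) + 1 + 2*c) * (u - 0)).
  { apply Rmult_le_pos; [|lra].
    replace (-1/(1-c) + 1 + 2*c) with (c*(1-2*c)/(1-c)) by (field; lra).
    apply Rmult_le_pos; [apply Rmult_le_pos; lra|]. apply Rlt_le, Rinv_0_lt_compat. lra. }
  replace (1-0) with 1 in Hc1 by lra. rewrite ln_1 in Hc1. lra.
Qed.

Lemma ln_le_m1 z : 0 < z -> ln z <= z - 1.
Proof.
  intros Hz. rewrite <- (ln_exp (z - 1)).
  destruct (Rle_lt_or_eq_dec z (exp (z-1))) as [H|H].
  - pose proof (exp_ineq1_le (z-1)). lra.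
  - apply Rlt_le, ln_increasing; auto.
  - rewrite <- H. lra.
Qed.

Lemma ln_le' x y : 0 < x -> x <= y -> ln x <= ln y.
Proof.
  intros Hx Hxy. destruct (Rle_lt_or_eq_dec x y Hxy) as [H|H].
  - apply Rlt_le, ln_increasing; auto.
  - rewrite H; lra.
Qed.

Section L.
Context {A : Type}.

Lemma lsum_plus (xs : list A) f g :
  lsum xs (fun a => f a + g a) = lsum xs f + lsum xs g.
Proof. induction xs; simpl; [lra|]. rewrite IHxs. lra. Qed.

Lemma lsum_scal (xs : list A) c f :
  lsum xs (fun a => c * f a) = c * lsum xs f.
Proof. induction xs; simpl; [lra|]. rewrite IHxs. lra. Qed.

Lemma lsum_ext (xs : list A) f g :
  (forall a, f a = g a) -> lsum xs f = lsum xs g.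
Proof. intros H; induction xs; simpl; [lra|]. rewrite IHxs, H. lra. Qed.

Lemma lsum_le (xs : list A) f g :
  (forall a, f a <= g a) -> lsum xs f <= lsum xs g.
Proof. intros H; induction xs; simpl; [lra|]. specialize (H a). lra. Qed.

Lemma lsum_const (xs : list A) c :
  lsum xs (fun _ => c) = INR (length xs) * c.
Proof.
  induction xs; simpl length; [simpl; lra|]. rewrite S_INR. simpl. rewrite IHxs. lra.
Qed.
End L.

Lemma lsum_app {B} (l1 l2 : list B) f : lsum (l1 ++ l2) f = lsum l1 f + lsum l2 f.
Proof. induction l1; simpl; [lra|]. rewrite IHl1. lra. Qed.

Lemma M_S {A} (h : nat -> A -> R) t x : M h (S t) x = M h t x + h (S t) x.
Proof.
  unfold M. rewrite seq_S, lsum_app. simpl. replace (1 + t)%nat with (S t) by lia. lra.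
Qed.

Theorem theorem1 (A : Type) (xs : list A)
  (Hnd : NoDup xs) (Hfull : forall a : A, In a xs)
  (eta gamma : R) (Heta : 0 <= eta <= 1 / 2) (Hgamma : 0 < gamma)
  (T : nat) (h : nat -> A -> R)
  (Hh : forall t, (1 <= t <= T)%nat -> forall x, 0 <= h t x <= 1)
  (Hedge : forall t, (1 <= t <= T)%nat ->
     lsum xs (fun x => h t x * pdist xs eta h (t - 1) x) >= gamma) :
  forall x : A,
    ln (pdist xs eta h T x) >=
      gamma * eta / (eta + 2) * INR T - eta * (eta + 1) * M h T x
      - ln (2 * INR (length xs)).
Proof.
  intros x.
  set (n := INR (length xs)).
  assert (Hn : 0 < n).
  { unfold n. apply lt_0_INR. destruct xs; [destruct (Hfull x)|simpl; lia]. }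
  assert (Main : forall t, (t <= T)%nat ->
    lsum xs (pdist xs eta h t) = 1 /\ forall y, 0 < pdist xs eta h t y /\
      ln (pdist xs eta h t y) >= - ln n + INR t * (eta * gamma)
         - eta * (eta + 1) * M h t y).
  { induction t as [|t IH]; intros Ht.
    - split.
      + simpl pdist. rewrite lsum_const. fold n. field. lra.
      + intros y. simpl pdist. split. apply Rinv_0_lt_compat; auto.
        rewrite ln_Rinv by auto. unfold M. simpl. fold n. lra.
    - destruct (IH ltac:(lia)) as [Hs Hp].
      set (p := pdist xs eta h t) in *.
      pose proof (Hedge (S t) ltac:(lia)) as He.
      replace (S t - 1)%nat with t in He by lia. fold p in He.
      set (Z := lsum xs (fun y => p y * (1 - eta * h (S t) y))).
      set (Sm := lsum xs (fun y => h (S t) y * p y)) in *.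
      assert (HZ : Z = 1 - eta * Sm).
      { unfold Z, Sm. rewrite (lsum_ext _ _ (fun y => p y + (- eta) * (h (S t) y * p y))).
        - rewrite lsum_plus, lsum_scal, Hs. ring.
        - intros a. ring. }
      assert (HS1 : Sm <= 1).
      { rewrite <- Hs. unfold Sm. apply lsum_le. intros a.
        destruct (Hh (S t) ltac:(lia) a). destruct (Hp a).
        rewrite <- (Rmult_1_l (p a)) at 2. apply Rmult_le_compat_r; lra. }
      assert (E1 : eta * Sm <= eta * 1) by (apply Rmult_le_compat_l; lra).
      assert (E2 : eta * gamma <= eta * Sm) by (apply Rmult_le_compat_l; lra).
      assert (HZp : 0 < Z) by lra.
      assert (HZg : Z <= 1 - eta * gamma) by lra.
      assert (Hpd : forall y, pdist xs eta h (S t) y = p y * (1 - eta * h (S t) y) / Z)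
        by reflexivity.
      split.
      + rewrite (lsum_ext _ _ (fun y => / Z * (p y * (1 - eta * h (S t) y)))).
        * rewrite lsum_scal. fold Z. field. lra.
        * intros a. rewrite Hpd. unfold Rdiv. ring.
      + intros y. rewrite Hpd. destruct (Hp y) as [Hpy Hly].
        destruct (Hh (S t) ltac:(lia) y) as [Hh0 Hh1].
        assert (Hu : 0 < 1 - eta * h (S t) y) by nra.
        split.
        * unfold Rdiv. apply Rmult_lt_0_compat; [apply Rmult_lt_0_compat|apply Rinv_0_lt_compat]; auto.
        * unfold Rdiv. rewrite !ln_mult, ln_Rinv; auto;
            [|apply Rmult_lt_0_compat; auto|apply Rinv_0_lt_compat; auto].
          pose proof (ln_bound (eta * h (S t) y) ltac:(split; nra)) as Hb.
          pose proof (ln_le_m1 Z HZp).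
          rewrite M_S, S_INR.
          assert (eta * h (S t) y * (eta * h (S t) y) <= eta * (eta * h (S t) y)).
          { apply Rmult_le_compat_r; nra. }
          nra. }
  destruct (Main T (le_n T)) as [_ Hp]. destruct (Hp x) as [_ Hl].
  rewrite ln_mult by lra. pose proof ln_lt_2.
  assert (gamma * eta / (eta + 2) * INR T <= INR T * (eta * gamma)).
  { pose proof (pos_INR T).
    assert (gamma * eta / (eta + 2) <= eta * gamma).
    { apply (Rmult_le_reg_r (eta + 2)); [lra|]. unfold Rdiv.
      rewrite Rmult_assoc, Rinv_l by lra. nra. }
    nra. }
  fold n. lra.
Qed.
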